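(* Let $g:\mathbb{R}^n\to\mathbb{R}^m$ and $f:\mathbb{R}^m\to\mathbb{R}^r$. Suppose $g$ is second-order gph-regular at $x^*$ and $f$ is second-order gph-regular at $g(x^* )$. Then the composite mapping $h:=f\circ g$ is second-order gph-regular at $x^*$.
   Context: $g'(x;d)=\lim_{t\downarrow0}(g(x+td)-g(x))/t$; second-order directional derivative $g''(x;d,w):=\lim_{t\downarrow0}\frac{g(x+td+\frac12t^2w)-g(x)-tg'(x;d)}{\frac12t^2}$; $g$ is second-order directionally differentiable at $x$ if these exist for all $d,w$. A mapping $g$ is second-order gph-regular at $x^*$ if it is locally Lipschitz continuous and second-order directionally differentiable at $x^*$, and for every direction $d$ and every path $w:\mathbb{R}_+\to\mathbb{R}^n$ with $tw(t)\to0$ as $t\downarrow0$ there is $r$ with $\|r(t)\|/t^2\to0$ as $t\downarrow0$ such that $g(x^*+td+\frac12t^2w(t))=g(x^* )+tg'(x^*;d)+\frac12t^2g''(x^*;d,w(t))+r(t)$ for $t\ge0$. *)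

(* Defs.v *)
(* R : realType, R^n rendered as row vectors 'rV[R]_n. *)
From HB Require Import structures.
From mathcomp Require Import all_boot all_order all_algebra.
From mathcomp Require Import all_classical all_reals all_analysis.
Set Implicit Arguments. Unset Strict Implicit. Unset Printing Implicit Defensive.
Import Order.TTheory GRing.Theory Num.Theory.
Import numFieldNormedType.Exports.
Local Open Scope classical_set_scope.
Local Open Scope ring_scope.

Section Defs.
Variables (R : realType) (n m : nat).
Implicit Types (g : 'rV[R]_n -> 'rV[R]_m) (x d w : 'rV[R]_n).

Definition loc_lipschitz_at g x : Prop :=
  exists k : R, exists2 e : R, 0 < e &
    forall y z, ball x e y -> ball x e z -> `|g y - g z| <= k * `|y - z|.

Definition dd_quot g x d : R -> 'rV[R]_m :=
  fun t => t^-1 *: (g (x + t *: d) - g x).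

Definition dir_deriv g x d : 'rV[R]_m := lim (dd_quot g x d @ 0^'+).

Definition dd2_quot g x d w : R -> 'rV[R]_m :=
  fun t => (t ^+ 2 / 2)^-1 *:
    (g (x + t *: d + (t ^+ 2 / 2) *: w) - g x - t *: dir_deriv g x d).

Definition dir_deriv2 g x d w : 'rV[R]_m := lim (dd2_quot g x d w @ 0^'+).

Definition so_dir_differentiable g x : Prop :=
  forall d w, cvg (dd_quot g x d @ 0^'+) /\ cvg (dd2_quot g x d w @ 0^'+).

Definition so_gph_regular g x : Prop :=
  [/\ loc_lipschitz_at g x, so_dir_differentiable g x &
    forall d (w : R -> 'rV[R]_n),
      (fun t => t *: w t) @ 0^'+ --> (0 : 'rV[R]_n) ->
      exists r : R -> 'rV[R]_m,
        (fun t => `|r t| / t ^+ 2) @ 0^'+ --> (0 : R) /\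
        forall t : R, 0 <= t ->
          g (x + t *: d + (t ^+ 2 / 2) *: w t) =
            g x + t *: dir_deriv g x d + (t ^+ 2 / 2) *: dir_deriv2 g x d (w t)
            + r t].
End Defs.

(* Main.v *)
Require Import Defs.
From HB Require Import structures.
From mathcomp Require Import all_boot all_order all_algebra.
From mathcomp Require Import all_classical all_reals all_analysis.
From mathcomp Require Import ring lra.
Import Order.TTheory GRing.Theory Num.Theory.
Import numFieldNormedType.Exports.
Local Open Scope ring_scope.

Section Aux.
Context {R : realType}.
Local Open Scope classical_set_scope.

Lemma zid1 {V : zmodType} {a x r G : V} : a + x + r = G -> x = G - a - r.
Proof. by move=> <-; rewrite addrAC addrK addrC addKr. Qed.

Lemma zid2 {V : zmodType} (P G y r : V) : P - y - r = (P - G) + (G - y) - r.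
Proof. by rewrite addrA subrK. Qed.

Lemma zid4 {V : zmodType} {F1 FQ b c e r : V} : FQ = b + c + e + r -> F1 - b - c - e = F1 - FQ + r.
Proof. by move=> ->; rewrite !opprD !addrA subrK. Qed.

Lemma zid3 {V : zmodType} {F1 FQ a r : V} : FQ = a + r -> F1 - a = F1 - FQ + r.
Proof. by move=> ->; rewrite opprD addrA subrK. Qed.

Lemma cvg_t0 : (fun t : R => t) @ 0^'+ --> (0:R).
Proof. apply: cvg_at_right_filter. exact: cvg_id. Qed.

Lemma bound0 {V : normedModType R} (u : R -> V) (b : R -> R) :
  b @ 0^'+ --> (0:R) -> (\forall t \near 0^'+, `|u t| <= b t) -> u @ 0^'+ --> (0:V).
Proof.
move=> hb hu; apply: norm_cvg0.
apply: (@squeeze_cvgr _ _ _ _ (fun=> 0) b); last 2 first.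
- exact: cvg_cst.
- exact: hb.
by apply: filterS hu => t h; rewrite normr_ge0 h.
Qed.

Lemma o2_o1 {u : R -> R} : (fun t => u t / t^+2) @ 0^'+ --> (0:R) ->
  (fun t => u t / t) @ 0^'+ --> (0:R).
Proof.
move=> h.
have -> : (fun t => u t / t) = (fun t => t * (u t / t^+2)).
  apply/funext => t; case: (eqVneq t 0) => [->|t0]; first by rewrite invr0 !mulr0 mul0r.
  by field.
have := cvgM cvg_t0 h; rewrite mulr0; exact.
Qed.

Lemma o2_0 {V : normedModType R} {u : R -> V} :
  (fun t => `|u t| / t^+2) @ 0^'+ --> (0:R) -> u @ 0^'+ --> (0:V).
Proof.
move=> h; apply: (@bound0 _ _ (fun t => t * (t * (`|u t| / t^+2)))).
  have := cvgM cvg_t0 (cvgM cvg_t0 h); rewrite !mul0r; exact.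
near=> t.
have t0 : t != 0 by rewrite gt_eqF//; near: t; exact: nbhs_right_gt.
by rewrite le_eqVlt; apply/orP; left; apply/eqP; field.
Unshelve. all: end_near. Qed.

Lemma sq_path {V : normedModType R} {u : R -> V} :
  (fun t => t *: u t) @ 0^'+ --> (0:V) ->
  (fun t => (t^+2/2) *: u t) @ 0^'+ --> (0:V).
Proof.
move=> h.
have -> : (fun t => (t^+2/2) *: u t) = (fun t => (t/2) *: (t *: u t)).
  by apply/funext => t; rewrite scalerA; congr (_ *: _); ring.
have := cvgZ (cvgM cvg_t0 (cvg_cst (2^-1 : R))) h; rewrite mul0r scale0r; exact.
Qed.

Lemma lin_path {V : normedModType R} (a : V) :
  (fun t => t *: a) @ 0^'+ --> (0:V).
Proof. have := cvgZ cvg_t0 (cvg_cst a); rewrite scale0r; exact. Qed.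

End Aux.

Section Main.
Variables (R : realType) (n m p : nat) (g : 'rV[R]_n -> 'rV[R]_m) (f : 'rV[R]_m -> 'rV[R]_p) (xs : 'rV[R]_n).
Hypotheses (Hg : so_gph_regular g xs) (Hf : so_gph_regular f (g xs)).
Local Open Scope classical_set_scope.

Lemma expansion d (w : R -> 'rV[R]_n) : (fun t => t *: w t) @ 0^'+ --> (0:'rV[R]_n) ->
  (fun t => `| f (g (xs + t *: d + (t^+2/2) *: w t)) - f (g xs)
     - t *: dir_deriv f (g xs) (dir_deriv g xs d)
     - (t^+2/2) *: dir_deriv2 f (g xs) (dir_deriv g xs d) (dir_deriv2 g xs d (w t))| / t^+2)
   @ 0^'+ --> (0:R).
Proof.
move=> Hw.
case: Hg => [[kg [eg eg0 Lg]] Dg Rg].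
case: Hf => [[kf [ef ef0 Lf]] Df Rf].
have [r1 [Hr1 E1]] := Rg d w Hw.
have r1_0 : r1 @ 0^'+ --> (0:'rV[R]_m) by apply: o2_0.
have r1t : (fun t => `|r1 t| / t) @ 0^'+ --> (0:R) by apply: o2_o1.
have Hdd : (fun t => dd_quot g xs d t - dir_deriv g xs d) @ 0^'+ --> (0:'rV[R]_m).
  by apply/subr_cvg0; exact: (Dg d 0).1.
have Pd : (fun t => xs + t *: d) @ 0^'+ --> xs.
  have := cvgD (cvg_cst xs) (lin_path d); rewrite addr0; exact.
have PP : (fun t => xs + t *: d + (t^+2/2) *: w t) @ 0^'+ --> xs.
  have := cvgD Pd (sq_path Hw); rewrite addr0; exact.
have tp : (fun t => t *: dir_deriv2 g xs d (w t)) @ 0^'+ --> (0:'rV[R]_m).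
  apply: (@bound0 _ _ _ (fun t => `|kg| * `|t *: w t| + 2 * `|dd_quot g xs d t - dir_deriv g xs d| + 2 * (`|r1 t| / t))).
    have := cvgD (cvgD (cvgM (cvg_cst `|kg|) (cvg_norm Hw)) (cvgM (cvg_cst (2:R)) (cvg_norm Hdd))) (cvgM (cvg_cst (2:R)) r1t).
    rewrite !normr0 !mulr0 !addr0; exact.
  near=> t.
  have t0 : 0 < t by near: t; exact: nbhs_right_gt.
  have b1 : ball xs eg (xs + t *: d).
    rewrite -ball_normE /=; near: t; exact: cvgr_dist_lt Pd _ eg0.
  have b2 : ball xs eg (xs + t *: d + (t^+2/2) *: w t).
    rewrite -ball_normE /=; near: t; exact: cvgr_dist_lt PP _ eg0.
  have tn0 : t != 0 by rewrite gt_eqF.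
  have eA := zid1 (esym (E1 t (ltW t0))).
  have eT : t *: dir_deriv2 g xs d (w t) = (2/t) *: ((t^+2/2) *: dir_deriv2 g xs d (w t)).
    by rewrite scalerA; congr (_ *: _); field.
  have edd : g (xs + t*:d) - g xs = t *: dd_quot g xs d t.
    by rewrite /dd_quot scalerA mulfV // scale1r.
  have e2 : g (xs + t *: d) - (g xs + t *: dir_deriv g xs d) = t *: (dd_quot g xs d t - dir_deriv g xs d).
    by rewrite opprD addrA edd scalerBr.
  rewrite eT normrZ eA (zid2 _ (g (xs + t *: d))) e2.
  have eP : xs + t *: d + (t^+2/2) *: w t - (xs + t *: d) = (t/2) *: (t *: w t).
    by rewrite addrC addKr scalerA; congr (_ *: _); field.
  have t2 : 0 <= t / 2 by rewrite divr_ge0 // ltW.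
  have N1 := Lg _ _ b2 b1; rewrite eP normrZ (ger0_norm t2) in N1.
  have N1' : `|g (xs + t *: d + (t ^+ 2 / 2) *: w t) - g (xs + t *: d)| <= `|kg| * (t / 2 * `|t *: w t|).
    apply: (le_trans N1); apply: ler_wpM2r; first exact: mulr_ge0 t2 (normr_ge0 _).
    exact: ler_norm.
  have h1 : `|g (xs + t *: d + (t ^+ 2 / 2) *: w t) - g (xs + t *: d) + t *: (dd_quot g xs d t - dir_deriv g xs d) - r1 t|
     <= `|kg| * (t / 2 * `|t *: w t|) + t * `|dd_quot g xs d t - dir_deriv g xs d| + `|r1 t|.
    apply: (le_trans (ler_normB _ _)); rewrite lerD2r.
    apply: (le_trans (ler_normD _ _)); apply: lerD => //.
    by rewrite normrZ gtr0_norm.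
  have t2' : 0 <= 2 / t by rewrite divr_ge0 // ltW.
  rewrite (ger0_norm t2').
  apply: (le_trans (ler_wpM2l t2' h1)).
  by rewrite le_eqVlt; apply/orP; left; apply/eqP; field.
have [r3 [Hr3 E3]] := Rf (dir_deriv g xs d) (fun t => dir_deriv2 g xs d (w t)) tp.
have Q0 : (fun t => g xs + t *: dir_deriv g xs d + (t^+2/2) *: dir_deriv2 g xs d (w t)) @ 0^'+ --> g xs.
  have := cvgD (cvgD (cvg_cst (g xs)) (lin_path (dir_deriv g xs d))) (sq_path tp); rewrite !addr0; exact.
have Q1 : (fun t => g xs + t *: dir_deriv g xs d + (t^+2/2) *: dir_deriv2 g xs d (w t) + r1 t) @ 0^'+ --> g xs.
  have := cvgD Q0 r1_0; rewrite !addr0; exact.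
apply: (@squeeze_cvgr _ _ _ _ (fun=> 0) (fun t => `|kf| * (`|r1 t| / t^+2) + `|r3 t| / t^+2)); last 2 first.
- exact: cvg_cst.
- have := cvgD (cvgM (cvg_cst `|kf|) Hr1) Hr3; rewrite mulr0 addr0; exact.
near=> t.
have t0 : 0 < t by near: t; exact: nbhs_right_gt.
have b1 : ball (g xs) ef (g xs + t *: dir_deriv g xs d + (t^+2/2) *: dir_deriv2 g xs d (w t)).
  rewrite -ball_normE /=; near: t; exact: cvgr_dist_lt Q0 _ ef0.
have b2 : ball (g xs) ef (g xs + t *: dir_deriv g xs d + (t^+2/2) *: dir_deriv2 g xs d (w t) + r1 t).
  rewrite -ball_normE /=; near: t; exact: cvgr_dist_lt Q1 _ ef0.
have s0 : 0 <= (t ^+ 2)^-1 by rewrite invr_ge0 sqr_ge0.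
apply/andP; split; first by rewrite /= mulr_ge0.
rewrite (E1 t (ltW t0)) (zid4 (E3 t (ltW t0))).
have N := Lf _ _ b2 b1.
rewrite (_ : forall a b : 'rV[R]_m, a + b - a = b) in N; last by move=> a b; rewrite addrC addKr.
have h : `|f (g xs + t *: dir_deriv g xs d + (t^+2/2) *: dir_deriv2 g xs d (w t) + r1 t)
   - f (g xs + t *: dir_deriv g xs d + (t^+2/2) *: dir_deriv2 g xs d (w t)) + r3 t| <= `|kf| * `|r1 t| + `|r3 t|.
  apply: (le_trans (ler_normD _ _)); rewrite lerD2r.
  apply: (le_trans N).
  exact: (ler_wpM2r (normr_ge0 _) (ler_norm _)).
rewrite mulrA -mulrDl.
have H2 := ler_wpM2r s0 h; exact: H2.
Unshelve. all: end_near.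
Qed.

Lemma lip_comp : loc_lipschitz_at (f \o g) xs.
Proof.
case: Hg => [[kg [eg eg0 Lg]] _ _]; case: Hf => [[kf [ef ef0 Lf]] _ _].
have K0 : 0 < `|kg| + 1 by have := normr_ge0 kg; lra.
exists (`|kf| * `|kg|); exists (Num.min eg (ef / (`|kg| + 1))).
  by rewrite lt_min eg0 divr_gt0.
move=> y z By Bz.
have gb : forall u, ball xs (Num.min eg (ef / (`|kg| + 1))) u -> ball (g xs) ef (g u).
  move=> u Bu; move: (Bu); rewrite -ball_normE /= lt_min => /andP[u1 u2].
  have Bu' : ball xs eg u by rewrite -ball_normE.
  have L := Lg _ _ (ballxx xs eg0) Bu'.
  rewrite -ball_normE /=; apply: (le_lt_trans L).
  rewrite ltr_pdivlMr // in u2.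
  have := normr_ge0 (xs - u); have := ler_norm kg.
  set a := `|xs - u|. move: u2. set b := `|xs - u|.
  rewrite (_ : b = a) //. nra.
have By' : ball xs eg y by move: By; rewrite -!ball_normE /= lt_min => /andP[].
have Bz' : ball xs eg z by move: Bz; rewrite -!ball_normE /= lt_min => /andP[].
have L1 := Lf _ _ (gb _ By) (gb _ Bz).
have L2 := Lg _ _ By' Bz'.
rewrite /=; apply: (le_trans L1).
have H1 := ler_wpM2r (normr_ge0 (g y - g z)) (ler_norm kf).
apply: (le_trans H1); rewrite -mulrA.
have H3 := ler_wpM2r (normr_ge0 (y - z)) (ler_norm kg).
have H2 := ler_wpM2l (normr_ge0 kf) (le_trans L2 H3).
exact: H2.
Qed.

Definition Ex d (w : R -> 'rV[R]_n) t :=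
  f (g (xs + t *: d + (t^+2/2) *: w t)) - f (g xs)
     - t *: dir_deriv f (g xs) (dir_deriv g xs d)
     - (t^+2/2) *: dir_deriv2 f (g xs) (dir_deriv g xs d) (dir_deriv2 g xs d (w t)).

Lemma D1 d : dd_quot (f \o g) xs d @ 0^'+ --> dir_deriv f (g xs) (dir_deriv g xs d).
Proof.
have H0 : (fun t : R => t *: (fun=> (0:'rV[R]_n)) t) @ 0^'+ --> (0:'rV[R]_n).
  have -> : (fun t : R => t *: (fun=> (0:'rV[R]_n)) t) = fun=> 0.
    by apply/funext => t; rewrite /= scaler0.
  exact: cvg_cst.
have E := expansion d (fun=> 0) H0.
have E' := o2_o1 E.
apply/subr_cvg0.
apply: (@bound0 _ _ _ (fun t => `|Ex d (fun=> 0) t| / t + t / 2 * `|dir_deriv2 f (g xs) (dir_deriv g xs d) (dir_deriv2 g xs d 0)|)).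
  have := cvgD E' (cvgM (cvgM cvg_t0 (cvg_cst (2^-1 : R))) (cvg_cst `|dir_deriv2 f (g xs) (dir_deriv g xs d) (dir_deriv2 g xs d 0)|)).
  rewrite !mul0r addr0; exact.
near=> t.
have t0 : 0 < t by near: t; exact: nbhs_right_gt.
have tn0 : t != 0 by rewrite gt_eqF.
have t2 : 0 <= t / 2 by rewrite divr_ge0 // ltW.
have -> : dd_quot (f \o g) xs d t - dir_deriv f (g xs) (dir_deriv g xs d) =
   t^-1 *: Ex d (fun=> 0) t + (t/2) *: dir_deriv2 f (g xs) (dir_deriv g xs d) (dir_deriv2 g xs d 0).
  rewrite /Ex /dd_quot /= scaler0 addr0.
  rewrite [X in _ = X + _]scalerBr [X in _ = X - _ + _]scalerBr scalerA mulVf // scale1r.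
  rewrite scalerA (_ : t^-1 * (t^+2/2) = t/2); last by field.
  by rewrite subrK.
apply: (le_trans (ler_normD _ _)).
rewrite !normrZ (gtr0_norm (x:=t^-1)) ?invr_gt0 // (gtr0_norm (x:=t)) //.
rewrite (gtr0_norm (x:=2^-1)) ?invr_gt0 //.
by rewrite le_eqVlt; apply/orP; left; apply/eqP; field.
Unshelve. all: end_near. Qed.

Lemma D1lim d : dir_deriv (f \o g) xs d = dir_deriv f (g xs) (dir_deriv g xs d).
Proof. by apply: cvg_lim => //; exact: D1. Qed.

Lemma D2 d a : dd2_quot (f \o g) xs d a @ 0^'+ -->
  dir_deriv2 f (g xs) (dir_deriv g xs d) (dir_deriv2 g xs d a).
Proof.
have E := expansion d (fun=> a) (lin_path a).
apply/subr_cvg0.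
apply: (@bound0 _ _ _ (fun t => 2 * (`|Ex d (fun=> a) t| / t^+2))).
  have := cvgM (cvg_cst (2:R)) E; rewrite mulr0; exact.
near=> t.
have t0 : 0 < t by near: t; exact: nbhs_right_gt.
have tn0 : t != 0 by rewrite gt_eqF.
have s0 : 0 < t^+2/2 by rewrite divr_gt0 // exprn_gt0.
have -> : dd2_quot (f \o g) xs d a t - dir_deriv2 f (g xs) (dir_deriv g xs d) (dir_deriv2 g xs d a) =
   (t^+2/2)^-1 *: Ex d (fun=> a) t.
  rewrite /Ex /dd2_quot D1lim /=.
  by rewrite [in RHS]scalerBr scalerA mulVf ?gt_eqF // scale1r.
rewrite normrZ gtr0_norm ?invr_gt0 //.
by rewrite le_eqVlt; apply/orP; left; apply/eqP; field.
Unshelve. all: end_near. Qed.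

Lemma D2lim d a : dir_deriv2 (f \o g) xs d a =
  dir_deriv2 f (g xs) (dir_deriv g xs d) (dir_deriv2 g xs d a).
Proof. by apply: cvg_lim => //; exact: D2. Qed.

Lemma comp_regular : so_gph_regular (f \o g) xs.
Proof.
split.
- exact: lip_comp.
- by move=> d w; split; [apply: cvgP (D1 d) | apply: cvgP (D2 d w)].
move=> d w Hw.
exists (fun t => (f \o g) (xs + t *: d + (t ^+ 2 / 2) *: w t) -
   ((f \o g) xs + t *: dir_deriv (f \o g) xs d + (t ^+ 2 / 2) *: dir_deriv2 (f \o g) xs d (w t))).
split; last by move=> t _; rewrite subrKC.
have -> : (fun t => `|(f \o g) (xs + t *: d + (t ^+ 2 / 2) *: w t) -
   ((f \o g) xs + t *: dir_deriv (f \o g) xs d + (t ^+ 2 / 2) *: dir_deriv2 (f \o g) xs d (w t))| / t^+2)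
   = (fun t => `|Ex d w t| / t^+2).
  by apply/funext => t; rewrite /Ex D1lim D2lim /= !opprD !addrA.
exact: expansion.
Qed.

End Main.

Theorem proposition2p4 (R : realType) (n m r : nat)
  (g : 'rV[R]_n -> 'rV[R]_m) (f : 'rV[R]_m -> 'rV[R]_r) (xs : 'rV[R]_n) :
  so_gph_regular g xs -> so_gph_regular f (g xs) ->
  so_gph_regular (f \o g) xs.
Proof.
exact: comp_regular.
Qed.
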